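(* For every $n\ge 1$, $s(n)\le \lfloor \log_2 p_n\rfloor$.
   Context: $p_n$ denotes the $n$-th prime ($p_1=2$). For an integer $k\ge 3$, say that a positive integer $m$ is represented by $F_k$ if there exist integers $1\le x_1\le x_2\le\dots\le x_k$ with $x_1x_2\cdots x_k+x_1+\dots+x_k=m$. For $n\ge 1$, $s(n)$ is the smallest integer $k\ge 3$ such that $p_n+k-3$ is represented by $F_k$, and $s(n)=0$ if no such $k\ge 3$ exists. *)

(* Defs.v *)
From mathcomp Require Import all_boot.
From mathcomp Require Import boolp.
Set Implicit Arguments. Unset Strict Implicit. Unset Printing Implicit Defensive.

Lemma next_prime_ex (q : nat) : exists p, (q < p) && prime p.
Proof. by case: (prime_above q) => p h1 h2; exists p; rewrite h1 h2. Qed.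

Definition next_prime (q : nat) : nat := ex_minn (next_prime_ex q).

Fixpoint prime_seq (i : nat) : nat :=
  if i is i'.+1 then next_prime (prime_seq i') else 2.

(* p_n, the n-th prime with p_1 = 2 (meaningful for n >= 1) *)
Definition nth_prime (n : nat) : nat := prime_seq n.-1.

Definition represented (k m : nat) : Prop :=
  exists x : seq nat,
    [/\ size x = k, all (fun y => 0 < y) x, sorted leq x &
        \prod_(y <- x) y + \sum_(y <- x) y = m].

Definition s_good (n k : nat) : Prop :=
  3 <= k /\ represented k (nth_prime n + k - 3).

(* s(n): smallest k >= 3 with p_n + k - 3 represented by F_k, or 0 if none *)
Definition s (n : nat) : nat :=
  match pselect (exists k, asbool (s_good n k)) with
  | left h => ex_minn h
  | right _ => 0
  end.

(* Main.v *)
Require Import Defs.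
From mathcomp Require Import all_boot.
From mathcomp Require Import boolp zify.

Lemma prime_seq_prime i : prime (prime_seq i).
Proof.
case: i => [|i] //=; rewrite /next_prime.
by case: ex_minnP => p /andP[_ ->].
Qed.

Lemma prod_ge2 (x : seq nat) : all (fun y => 1 < y) x -> 2 ^ size x <= \prod_(y <- x) y.
Proof.
elim: x => [|a x IH] /=; first by rewrite big_nil.
move=> /andP[ha hx]; rewrite big_cons expnS.
by apply: leq_mul => //; apply: IH.
Qed.

Lemma sum_ge2 (x : seq nat) : all (fun y => 1 < y) x -> 2 * size x <= \sum_(y <- x) y.
Proof.
elim: x => [|a x IH] /=; first by rewrite big_nil.
move=> /andP[ha hx]; rewrite big_cons mulnS.
by apply: leq_add => //; apply: IH.
Qed.

Lemma all_ge2 (a : nat) (x : seq nat) : 1 < a -> path leq a x -> all (fun y => 1 < y) (a :: x).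
Proof.
elim: x a => [|b x IH] a ha /=; first by rewrite ha.
move=> /andP[hab hp]; rewrite ha /=.
by apply: (IH b) => //; apply: leq_trans hab.
Qed.

Theorem proposition4 (n : nat) : 1 <= n -> s n <= trunc_log 2 (nth_prime n).
Proof.
move=> _; rewrite /s; case: pselect => [h|_]; last done.
case: ex_minnP => k /asboolP [hk3 [x [hsz hpos hsort heq]]] hmin.
have hp : prime (nth_prime n) by apply: prime_seq_prime.
case: x hsz hpos hsort heq => [|a x] hsz hpos hsort heq; first by rewrite -hsz in hk3.
move: hpos => /= /andP[ha hpos].
case: (ltnP 1 a) => ha2.
- have hall := @all_ge2 a x ha2 hsort.
  have h1 := @prod_ge2 _ hall; have h2 := @sum_ge2 _ hall.
  rewrite hsz in h1 h2.
  have : 2 ^ k <= nth_prime n by lia.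
  move/(leq_trunc_log 2); rewrite trunc_expnK //.
- have a1 : a = 1 by lia.
  subst a.
  move: heq; rewrite big_cons big_cons mul1n => heq.
  case: (ltnP 3 k) => hk.
  + have : k <= k.-1.
      apply: hmin; apply/asboolP; split; first by lia.
      exists x; split => //.
      * move: hsz => /=; lia.
      * exact: path_sorted hsort.
      * lia.
    lia.
  + have hk' : k = 3 by lia.
    rewrite hk' in hsz heq.
    case: x hsz hpos hsort heq => [|b [|c [|d x]]] //= _ /andP[hb /andP[hc _]] _.
    rewrite !big_cons !big_nil !muln1 !addn0 => heq.
    have e : nth_prime n = b.+1 * c.+1 by lia.
    move: hp; rewrite e => /primeP[_ /(_ b.+1)].
    have -> : b.+1 %| b.+1 * c.+1 by apply: dvdn_mulr.
    move=> /(_ isT) /orP[/eqP|/eqP]; lia.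
Qed.
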